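(* Let $\mathcal{A}=\sum_{i=1}^r\lambda_i u_i\otimes u_i\otimes\bar u_i\otimes\bar u_i$ be a CPS tensor with $0\neq\lambda_i\in\mathbb{R}$ and $u_i\in\mathbb{C}^n$, and let $U=\{u_1,\dots,u_r\}$. If $2k_U\ge r+2$, where $k_U$ is the Kruskal rank of $U$, then $rank_{cps}(\mathcal{A})=r$, and the CPS rank decomposition of $\mathcal{A}$ is unique up to permutation of the terms and scaling of the decomposing vectors.
   Context: A tensor $\mathcal{A}\in\mathbb{C}^{n\times n\times n\times n}$ is conjugate partial-symmetric (CPS) if $\mathcal{A}_{ijkl}=\overline{\mathcal{A}_{klij}}$ and $\mathcal{A}_{ijkl}=\mathcal{A}_{jikl}=\mathcal{A}_{ijlk}$ for all indices. The CPS rank $rank_{cps}(\mathcal{A})$ is the smallest $r$ such that $\mathcal{A}=\sum_{i=1}^r\lambda_i a_i\otimes a_i\otimes\bar a_i\otimes\bar a_i$ with $\lambda_i\in\mathbb{R}$, $a_i\in\mathbb{C}^n$; such a decomposition with $r=rank_{cps}(\mathcal{A})$ terms is a CPS rank decomposition. The Kruskal rank $k_U$ of a finite set of vectors $U$ is the largest $k$ such that every subset of $k$ vectors of $U$ is linearly independent. *)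

(* Defs.v *)
From HB Require Import structures.
From mathcomp Require Import all_boot all_order all_algebra.
From mathcomp Require Import fingroup perm complex reals.
Set Implicit Arguments. Unset Strict Implicit. Unset Printing Implicit Defensive.
Import Order.TTheory GRing.Theory Num.Theory.
Local Open Scope ring_scope.

Definition tensor4 (R : realType) (n : nat) := 'I_n -> 'I_n -> 'I_n -> 'I_n -> R[i].

Definition is_cps (R : realType) (n : nat) (A : tensor4 R n) : Prop :=
  forall i j k l,
    A i j k l = (A k l i j)^* /\ A i j k l = A j i k l /\ A i j k l = A i j l k.

Definition cps_sum (R : realType) (n r : nat) (lam : 'I_r -> R)
    (a : 'I_r -> 'rV[R[i]]_n) : tensor4 R n :=
  fun i j k l =>
    \sum_(s < r) ((lam s)%:C)%C * a s 0 i * a s 0 j * (a s 0 k)^* * (a s 0 l)^*.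

Definition has_cps_decomp (R : realType) (n : nat) (A : tensor4 R n) (r : nat) : Prop :=
  exists (lam : 'I_r -> R) (a : 'I_r -> 'rV[R[i]]_n), A = cps_sum lam a.

Definition cps_rank_is (R : realType) (n : nat) (A : tensor4 R n) (r : nat) : Prop :=
  has_cps_decomp A r /\ (forall m, (m < r)%N -> ~ has_cps_decomp A m).

Definition kruskal_rank (F : fieldType) (n r : nat) (u : 'I_r -> 'rV[F]_n) : nat :=
  \max_(k < r.+1 | [forall S : {set 'I_r}, (#|S| == k) ==> free [seq u s | s in S]]) k.

(* Main.v *)
Require Import Defs.
From HB Require Import structures.
From mathcomp Require Import all_boot all_order all_algebra.
From mathcomp Require Import fingroup perm complex reals.
From mathcomp Require Import ring zify.
Import Order.TTheory GRing.Theory Num.Theory.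
Local Open Scope ring_scope.
Set Implicit Arguments. Unset Strict Implicit. Unset Printing Implicit Defensive.

Section Work.
Variable R : realType.
Local Notation C := (R[i]).

Definition Bm m n (a : 'I_m -> 'rV[C]_n) : 'M[C]_(m, n) := \matrix_(s, j) a s 0 j.
Definition Wm m n (a : 'I_m -> 'rV[C]_n) : 'M[C]_(m, n * n) :=
  \matrix_(s, k) mxvec ((a s)^T *m a s) 0 k.
Definition Tc m n (d : 'rV[C]_m) (a : 'I_m -> 'rV[C]_n) : 'M[C]_(n * n) :=
  (Wm a)^T *m diag_mx d *m map_mx Num.conj (Wm a).
Definition csum m n (d : 'I_m -> C) (a : 'I_m -> 'rV[C]_n) : tensor4 R n :=
  fun i j k l => \sum_(s < m) d s * a s 0 i * a s 0 j * (a s 0 k)^* * (a s 0 l)^*.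

Lemma WmE m n (a : 'I_m -> 'rV[C]_n) s i j :
  Wm a s (mxvec_index i j) = a s 0 i * a s 0 j.
Proof.
by rewrite /Wm mxE mxvecE mxE big_ord1 !mxE.
Qed.

Lemma TcE m n (d : 'rV[C]_m) (a : 'I_m -> 'rV[C]_n) i j k l :
  Tc d a (mxvec_index i j) (mxvec_index k l) = csum (fun s => d 0 s) a i j k l.
Proof.
rewrite /Tc /csum mul_mx_diag mxE; apply: eq_bigr => s _.
rewrite !mxE !mxvecE !mxE !big_ord1 !mxE rmorphM /=; ring.
Qed.

Lemma Tc_eq m m' n (d : 'rV[C]_m) (a : 'I_m -> 'rV[C]_n) (d' : 'rV[C]_m') (b : 'I_m' -> 'rV[C]_n) :
  (forall i j k l, csum (fun s => d 0 s) a i j k l = csum (fun s => d' 0 s) b i j k l) ->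
  Tc d a = Tc d' b.
Proof.
move=> E; apply/matrixP => x y.
case: (mxvec_indexP x) => i j; case: (mxvec_indexP y) => k l.
by rewrite !TcE E.
Qed.

Definition indep r n (a : 'I_r -> 'rV[C]_n) (T : {set 'I_r}) : Prop :=
  forall c : 'I_r -> C, \sum_(s in T) c s *: a s = 0 -> forall s, s \in T -> c s = 0.

Lemma free_indep r n (a : 'I_r -> 'rV[C]_n) (T : {set 'I_r}) :
  free [seq a s | s in T] -> indep a T.
Proof.
move=> Hf c Hc s sT.
set X := [seq a s | s in T] in Hf.
have /freeP Hk := (Hf : free (in_tuple X)).
have szX : size X = size (enum T) by rewrite size_map.
have ltX : (index s (enum T) < size X)%N by rewrite szX index_mem mem_enum.
have := Hk (fun i => c (nth s (enum T) i)) _ (Ordinal ltX).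
rewrite /= nth_index ?mem_enum //; apply.
rewrite -(big_mkord xpredT (fun i => c (nth s (enum T) i) *: X`_i)).
rewrite szX; transitivity (\sum_(s in T) c s *: a s); last exact Hc.
rewrite -big_enum /= (big_nth s) /=.
apply: eq_big_nat => i /andP[_ Hi].
by rewrite /X (nth_map s).
Qed.

Lemma indep_sub r n (a : 'I_r -> 'rV[C]_n) (T T' : {set 'I_r}) :
  T \subset T' -> indep a T' -> indep a T.
Proof.
move=> sTT' H c Hc s sT.
suff: (fun s => if s \in T then c s else 0) s = 0 by rewrite /= sT.
apply: (H (fun s => if s \in T then c s else 0)); last exact: (subsetP sTT' s sT).
rewrite -[RHS]Hc big_mkcond [RHS]big_mkcond /=; apply: eq_bigr => x _.
case xT: (x \in T); first by rewrite (subsetP sTT' x xT).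
by case: (x \in T'); rewrite ?scale0r.
Qed.
Lemma extend_set (T : finType) (A Cs : {set T}) d :
  A \subset Cs -> (#|A| + d <= #|Cs|)%N ->
  exists B : {set T}, [/\ A \subset B, B \subset Cs & #|B| = (#|A| + d)%N].
Proof.
move=> sAC; elim: d => [|d IH] Hd.
  by exists A; rewrite addn0 subxx.
have [B [sAB sBC cB]] := IH ltac:(lia).
have : ~~ (Cs \subset B).
  apply/negP => /subset_leq_card; rewrite cB; move: Hd; rewrite addnS; lia.
case/subsetPn => x xC xB.
exists (x |: B); split.
- by apply: subset_trans sAB (subsetUr _ _).
- by rewrite subUset sub1set xC.
- by rewrite cardsU1 xB cB addnS.
Qed.

Lemma kruskal_spec r n (u : 'I_r -> 'rV[C]_n) :
  (kruskal_rank u <= r)%N /\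
  forall S : {set 'I_r}, #|S| = kruskal_rank u -> free [seq u s | s in S].
Proof.
set P := fun k : 'I_r.+1 => [forall S : {set 'I_r}, (#|S| == k) ==> free [seq u s | s in S]].
have P0 : P ord0.
  apply/forallP => S; apply/implyP => /eqP /cards0_eq ->.
  rewrite (_ : [seq u s | s in set0] = [::]) ?nil_free //.
  by apply: size0nil; rewrite size_map -cardE cards0.
have [k0 Pk0 Ek] : {i0 : 'I_r.+1 | i0 \in P & \max_(i in P) i = i0}.
  apply: eq_bigmax_cond; apply/card_gt0P; by exists ord0.
rewrite /kruskal_rank.
have -> : \max_(k < r.+1 | [forall S : {set 'I_r}, (#|S| == k) ==> free [seq u s | s in S]]) k = k0.
  exact: Ek.
split; first by rewrite -ltnS ltn_ord.
move=> S HS; move/forallP: Pk0 => /(_ S) /implyP; apply; by rewrite HS.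
Qed.

Lemma kruskal_indep r n (u : 'I_r -> 'rV[C]_n) (T : {set 'I_r}) :
  (#|T| <= kruskal_rank u)%N -> indep u T.
Proof.
move=> HT; have [Kr KS] := kruskal_spec u.
have [B [sTB _ cB]] := @extend_set _ T setT (kruskal_rank u - #|T|) (subsetT T)
  ltac:(rewrite cardsT card_ord; lia).
apply: indep_sub sTB _; apply: free_indep; apply: KS; rewrite cB; lia.
Qed.
Definition supp m (al : 'rV[C]_m) : {set 'I_m} := [set s | al 0 s != 0].

Lemma rank_DB r n (a : 'I_r -> 'rV[C]_n) (al : 'rV[C]_r) (T : {set 'I_r}) :
  T \subset supp al -> indep a T -> (#|T| <= \rank (diag_mx al *m Bm a))%N.
Proof.
move=> sTS HT.
have [-> | [x0 x0T]] := set_0Vmem T; first by rewrite cards0.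
pose ev := fun i : 'I_#|T| => (enum_val i : 'I_r).
set M' := rowsub ev (diag_mx al *m Bm a).
have -> : #|T| = \rank M'.
  apply/eqP; rewrite eq_sym; change (row_free M'); apply/inj_row_free => x Hx.
  pose c := fun s => x 0 (enum_rank_in x0T s) * al 0 s.
  have Hc : \sum_(s in T) c s *: a s = 0.
    rewrite big_enum_val; apply: (etrans _ Hx); apply/rowP => j.
    rewrite !mxE summxE; apply: eq_bigr => i _; rewrite !mxE /c /ev enum_valK_in.
    rewrite (bigD1 (enum_val i)) //= big1 => [|k /negPf nk]; last first.
      by rewrite !mxE eq_sym nk mulr0n mul0r.
    rewrite !mxE eqxx mulr1n addr0; ring.
  apply/rowP => i; rewrite mxE.
  have := HT c Hc (ev i) (enum_valP i); rewrite /c /ev enum_valK_in.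
  move/eqP; rewrite mulf_eq0 => /orP[/eqP //|].
  have := subsetP sTS _ (enum_valP i); rewrite inE => /negPf ->; done.
by rewrite /M' rowsubE mxrankM_maxr.
Qed.
Lemma rank_diag_le m (al : 'rV[C]_m) : (\rank (diag_mx al) <= #|supp al|)%N.
Proof.
rewrite diag_mx_sum_delta (bigID (fun s => s \in supp al)) /=.
rewrite [X in _ + X]big1 ?addr0 => [|s]; last first.
  by rewrite inE negbK => /eqP ->; rewrite scale0r.
rewrite -sum1_card.
apply: (big_ind2 (fun (A : 'M[C]_m) (k : nat) => (\rank A <= k)%N)).
- by rewrite mxrank0.
- move=> x1 y1 x2 y2 H1 H2; exact: leq_trans (mxrank_add _ _) (leq_add H1 H2).
- move=> s _; rewrite -mul_scalar_mx; apply: leq_trans (mxrankM_maxr _ _) _.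
  by rewrite mxrank_delta.
Qed.

Lemma Q_bound r n (u : 'I_r -> 'rV[C]_n) (al : 'rV[C]_r) :
  (2 * minn #|supp al| (kruskal_rank u) <=
   \rank ((Bm u)^T *m diag_mx al *m Bm u) + #|supp al|)%N.
Proof.
have F := mxrank_Frobenius (Bm u)^T (diag_mx al) (Bm u).
have E : \rank ((Bm u)^T *m diag_mx al) = \rank (diag_mx al *m Bm u).
  by rewrite -mxrank_tr trmx_mul tr_diag_mx trmxK.
have [T [_ sTS cT]] := @extend_set _ set0 (supp al) (minn #|supp al| (kruskal_rank u))
   (sub0set _) ltac:(rewrite cards0; lia).
rewrite cards0 add0n in cT.
have HT : indep u T by apply: kruskal_indep; rewrite cT; lia.
have := rank_DB sTS HT; have := rank_diag_le al.
rewrite E in F; rewrite cT => H1 H2.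
rewrite mul2n -addnn; apply: leq_trans (leq_add H2 H2) _; apply: leq_trans F _.
rewrite addnC; apply: leq_add => //; exact: leqnn.
Qed.
Lemma WQ r n (a : 'I_r -> 'rV[C]_n) (x : 'rV[C]_r) :
  x *m Wm a = mxvec ((Bm a)^T *m diag_mx x *m Bm a).
Proof.
apply/rowP => k; case: (mxvec_indexP k) => i j.
rewrite mxvecE !mxE; apply: eq_bigr => s _.
rewrite WmE mul_mx_diag !mxE; ring.
Qed.

Lemma supp_le r (al : 'rV[C]_r) : (#|supp al| <= r)%N.
Proof. by rewrite -[X in (_ <= X)%N]card_ord max_card. Qed.

Lemma Wfree r n (u : 'I_r -> 'rV[C]_n) :
  (r + 2 <= 2 * kruskal_rank u)%N -> row_free (Wm u).
Proof.
move=> HK; apply/inj_row_free => x Hx.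
have HQ : (Bm u)^T *m diag_mx x *m Bm u = 0.
  by rewrite -[LHS]mxvecK -WQ Hx; apply/matrixP => i j; rewrite !mxE.
have := Q_bound u x; rewrite HQ mxrank0 add0n => Hb.
have := supp_le x => Hs.
have Hp : #|supp x| = 0%N by lia.
apply/rowP => s; rewrite mxE; apply/eqP.
move/cards0_eq: Hp => /setP /(_ s); rewrite !inE => /negbT; by rewrite negbK.
Qed.
Lemma diag_unit m (d : 'rV[C]_m) : (forall s, d 0 s != 0) -> diag_mx d \in unitmx.
Proof.
move=> Hd; rewrite unitmxE det_diag unitfE; apply/prodf_neq0 => s _; exact: Hd.
Qed.

Lemma Tc_rank r n (u : 'I_r -> 'rV[C]_n) (d : 'rV[C]_r) :
  row_free (Wm u) -> (forall s, d 0 s != 0) -> \rank (Tc d u) = r.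
Proof.
move=> Hf Hd; rewrite /Tc -mulmxA.
set Y := diag_mx d *m map_mx Num.conj (Wm u).
rewrite -mxrank_tr trmx_mul trmxK mxrankMfree // mxrank_tr.
apply/eqP; rewrite eqn_leq rank_leq_row /=.
have E : \rank (map_mx Num.conj (Wm u)) = r.
  by rewrite mxrank_map; apply/eqP; exact: Hf.
rewrite -[X in (X <= _)%N]E.
rewrite -{1}(mulKmx (diag_unit Hd) (map_mx Num.conj (Wm u))).
exact: mxrankM_maxr.
Qed.

Lemma Tc_rank_le m n (d : 'rV[C]_m) (v : 'I_m -> 'rV[C]_n) : (\rank (Tc d v) <= m)%N.
Proof.
rewrite /Tc; apply: leq_trans (mxrankM_maxl _ _) _.
apply: leq_trans (mxrankM_maxl _ _) _; exact: rank_leq_col.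
Qed.

Lemma Tc_cancel r n (u : 'I_r -> 'rV[C]_n) (d d' : 'rV[C]_r) :
  row_free (Wm u) -> Tc d u = Tc d' u -> d = d'.
Proof.
move=> Hf; rewrite /Tc -!mulmxA => /(congr1 trmx); rewrite !trmx_mul !trmxK => E1.
have E2 : diag_mx d *m map_mx Num.conj (Wm u) = diag_mx d' *m map_mx Num.conj (Wm u).
  apply: trmx_inj; rewrite !trmx_mul. have H := row_free_inj Hf E1. exact H.
have Hf' : row_free (map_mx Num.conj (Wm u)) by rewrite row_free_map.
have E := row_free_inj Hf' E2.
apply/rowP => s; have := congr1 (fun M : 'M[C]_r => M s s) E.
by rewrite !mxE eqxx !mulr1n.
Qed.
Lemma scale_lemma n (v w : 'rV[C]_n) (a : C) i0 :
  v 0 i0 != 0 -> (forall i j, v 0 i * v 0 j = a * (w 0 i * w 0 j)) ->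
  exists c, c != 0 /\ v = c *: w.
Proof.
move=> Hv0 H.
have H0 := H i0 i0.
have Hw0 : w 0 i0 != 0.
  apply/negP => /eqP Hw; move: H0; rewrite Hw !mul0r mulr0 => /eqP.
  by rewrite mulf_eq0 (negPf Hv0).
exists (v 0 i0 / w 0 i0); split; first by rewrite mulf_neq0 ?invr_eq0.
apply/rowP => i; rewrite mxE.
apply: (mulIf (mulf_neq0 Hv0 Hw0)).
have -> : v 0 i0 / w 0 i0 * w 0 i * (v 0 i0 * w 0 i0) = v 0 i0 * v 0 i0 * w 0 i.
  by field.
rewrite H0 mulrA (H i i0); ring.
Qed.

Lemma rowW m n (a : 'I_m -> 'rV[C]_n) t : row t (Wm a) = mxvec ((a t)^T *m a t).
Proof. by apply/rowP => k; rewrite !mxE. Qed.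

Lemma Tc_trS m n (d : 'rV[C]_m) (a : 'I_m -> 'rV[C]_n) : ((Tc d a)^T <= Wm a)%MS.
Proof. by rewrite /Tc !trmx_mul trmxK mulmxA submxMl. Qed.
Lemma match_exists r n (u v : 'I_r -> 'rV[C]_n) (lamC muC : 'rV[C]_r) :
  (r + 2 <= 2 * kruskal_rank u)%N -> (forall s, lamC 0 s != 0) ->
  Tc muC v = Tc lamC u ->
  row_free (Wm v) /\ forall t, exists s, exists c, c != 0 /\ v t = c *: u s.
Proof.
move=> HK Hl E.
have Hfu := Wfree HK.
have Hr := Tc_rank Hfu Hl.
have SU := Tc_trS lamC u.
have SV := Tc_trS muC v; rewrite E in SV.
have Hrt : \rank (Tc lamC u)^T = r by rewrite mxrank_tr.
have HvT : (Wm v <= (Tc lamC u)^T)%MS.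
  rewrite -(geq_leqif (mxrank_leqif_sup SV)) Hrt; exact: rank_leq_row.
have Hfv : row_free (Wm v).
  rewrite /row_free eqn_leq rank_leq_row /= -{1}Hrt; exact: mxrankS.
split=> // t.
have /submxP [x Hx] : (row t (Wm v) <= Wm u)%MS.
  exact: submx_trans (row_sub t (Wm v)) (submx_trans HvT SU).
have [k Hk] : exists k, Wm v t k != 0.
  case: (pickP (fun k => Wm v t k != 0)) => [k Hk | H]; first by exists k.
  have : row t (Wm v) = 0 *m Wm v.
    apply/rowP => k; rewrite mul0mx [RHS]mxE mxE; by move: (H k) => /= /negbFE /eqP.
  rewrite rowE => /(row_free_inj Hfv) /rowP /(_ t).
  by rewrite !mxE eqxx eqxx /= => /eqP; rewrite oner_eq0.
have Hrow : row t (Wm v) 0 k != 0 by rewrite mxE.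
move: Hk; case: (mxvec_indexP k) Hrow => i0 j0 Hrow; rewrite WmE => Hk.
have Hv0 : v t 0 i0 != 0 by apply/negP => /eqP H0; move: Hk; rewrite H0 mul0r eqxx.
have HQ : (v t)^T *m v t = (Bm u)^T *m diag_mx x *m Bm u.
  by apply: (can_inj mxvecK); rewrite -rowW -WQ.
have Hb := Q_bound u x; rewrite -HQ in Hb.
have Hr1 : (\rank ((v t)^T *m v t) <= 1)%N.
  apply: leq_trans (mxrankM_maxl _ _) _; exact: rank_leq_col.
have Hs := supp_le x.
have Hp0 : #|supp x| != 0%N.
  apply/negP => /eqP /cards0_eq Hx0.
  have x0 : x = 0.
    apply/rowP => s; rewrite mxE; apply/eqP.
    by move/setP: Hx0 => /(_ s); rewrite !inE => /negbT; rewrite negbK.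
  by move: Hrow; rewrite Hx x0 mul0mx mxE eqxx.
have Hp1 : #|supp x| = 1%N.
  have : (2 * minn #|supp x| (kruskal_rank u) <= 1 + #|supp x|)%N.
    apply: leq_trans Hb _; rewrite leq_add2r; exact: Hr1.
  move: Hp0; lia.
have /cards1P [s Hsx] : #|supp x| == 1%N by apply/eqP.
have Hxs : x 0 s != 0 by have := set11 s; rewrite -Hsx inE.
have Hxo : forall s', s' != s -> x 0 s' = 0.
  move=> s' ns; apply/eqP; move: (ns); apply: contraNT => Hn.
  by rewrite -in_set1 -Hsx inE.
exists s; apply: (@scale_lemma _ _ _ (x 0 s) i0 Hv0) => i j.
have := congr1 (fun M : 'rV[C]_(n * n) => M 0 (mxvec_index i j)) Hx.
rewrite /= rowW mxvecE !mxE big_ord1 !mxE => ->.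
rewrite (bigD1 s) //= big1 ?addr0 ?WmE // => s' ns.
by rewrite Hxo ?mul0r.
Qed.
Lemma match_inj r n (u v : 'I_r -> 'rV[C]_n) t1 t2 s c1 c2 :
  row_free (Wm v) -> c1 != 0 -> c2 != 0 ->
  v t1 = c1 *: u s -> v t2 = c2 *: u s -> t1 = t2.
Proof.
move=> Hf Hc1 Hc2 Hv1 Hv2; apply/eqP; apply: contraT => nt.
pose x : 'rV[C]_r := c2 ^+ 2 *: delta_mx 0 t1 - c1 ^+ 2 *: delta_mx 0 t2.
have : x *m Wm v = 0 *m Wm v.
  rewrite mul0mx /x mulmxBl -!scalemxAl -!rowE.
  apply/rowP => k; case: (mxvec_indexP k) => i j.
  rewrite !mxE !mxvecE !mxE !big_ord1 !mxE Hv1 Hv2 !mxE; ring.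
move/(row_free_inj Hf)/rowP/(_ t1); rewrite !mxE eqxx (negPf nt) /=.
rewrite eqxx mulr0 subr0 mulr1 => /eqP; rewrite expf_eq0 /= (negPf Hc2).
done.
Qed.
Lemma realC_neq0 (x : R) : x != 0 -> (x%:C)%C != 0 :> C.
Proof.
move=> Hx; apply/negP => /eqP H; move/negP: Hx; apply; apply/eqP.
by have := congr1 (@complex.Re R) H.
Qed.

Lemma csum_row m n (f : 'I_m -> C) (a : 'I_m -> 'rV[C]_n) i j k l :
  csum (fun s => (\row_s0 f s0) 0 s) a i j k l = csum f a i j k l.
Proof. by apply: eq_bigr => s _; rewrite mxE. Qed.

End Work.

Theorem proposition3p2 (R : realType) (n r : nat)
    (lam : 'I_r -> R) (u : 'I_r -> 'rV[R[i]]_n) :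
  (forall s, lam s != 0) ->
  (r + 2 <= 2 * kruskal_rank u)%N ->
  cps_rank_is (cps_sum lam u) r /\
  (forall (mu : 'I_r -> R) (v : 'I_r -> 'rV[R[i]]_n),
     cps_sum mu v = cps_sum lam u ->
     exists sigma : 'S_r, forall s : 'I_r,
       exists c : R[i], c != 0 /\ v (sigma s) = c *: u s /\
         ((mu (sigma s))%:C)%C * (c * c^*) ^+ 2 = ((lam s)%:C)%C).
Proof.
move=> Hl HK.
pose lamC := \row_s ((lam s)%:C)%C : 'rV[R[i]]_r.
have HlC : forall s, lamC 0 s != 0 by move=> s; rewrite mxE; apply: realC_neq0.
have Hfu := Wfree HK.
have Hr := Tc_rank Hfu HlC.
split.
  split; first by exists lam, u.
  move=> m Hm [lam' [a' E]].
  have ET : Tc lamC u = Tc (\row_s ((lam' s)%:C)%C) a'.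
    apply: Tc_eq => i j k l; rewrite !csum_row.
    exact: (congr1 (fun A : tensor4 R n => A i j k l) E).
  have := Tc_rank_le (\row_s ((lam' s)%:C)%C) a'; rewrite -ET Hr; lia.
move=> mu v E.
pose muC := \row_s ((mu s)%:C)%C : 'rV[R[i]]_r.
have Et : Tc muC v = Tc lamC u.
  apply: Tc_eq => i j k l; rewrite !csum_row.
  exact: (congr1 (fun A : tensor4 R n => A i j k l) E).
have [Hfv Hm] := match_exists HK HlC Et.
have [f Hf] := fin_all_exists Hm.
have finj : injective f.
  move=> t1 t2 Hft; have [c1 [H1 H1']] := Hf t1; have [c2 [H2 H2']] := Hf t2.
  rewrite Hft in H1'; exact: match_inj Hfv H1 H2 H1' H2'.
set sigma : 'S_r := ((perm finj)^-1)%g.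
have Hsig : forall s, f (sigma s) = s.
  by move=> s; rewrite -(permE finj) permKV.
have Hc : forall s, exists c, c != 0 /\ v (sigma s) = c *: u s.
  by move=> s; rewrite -{2}(Hsig s); exact: Hf.
have [cf Hcf] := fin_all_exists Hc.
pose d2 := \row_s ((mu (sigma s))%:C%C * (cf s * (cf s)^*) ^+ 2) : 'rV[R[i]]_r.
have Ed : d2 = lamC.
  apply: (Tc_cancel Hfu); apply: Tc_eq => i j k l; rewrite !csum_row.
  rewrite [RHS](_ : _ = cps_sum lam u i j k l) //.
  rewrite -E /cps_sum /csum [in RHS](reindex_inj (@perm_inj _ sigma)) /=.
  apply: eq_bigr => s _; case: (Hcf s) => _ ->.
  rewrite !mxE !rmorphM /=; ring.
exists sigma => s; exists (cf s); have [Hc1 Hc2] := Hcf s; split => //; split => //.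
by have := congr1 (fun d : 'rV[R[i]]_r => d 0 s) Ed; rewrite /= !mxE.
Qed.
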